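(* Let $p$ be a graph and $V_c(p)$ a vertex cover of $p$ such that the induced subgraph $p[V_c(p)]$ has at least two connected components. Let $Q$ be a set of join units of $p$ with respect to $V_c(p)$ whose union is $p$, and let $T$ be any join tree for $p$ over $Q$. Then $T$ has an internal node whose two children are labeled by subgraphs $p_1,p_2$ with $V(p_1)\cap V(p_2)\cap V_c(p)=\emptyset$.
   Context: Graphs are finite, simple and undirected. A vertex cover of $p$ is a set $V_c(p)\subseteq V(p)$ containing an endpoint of every edge of $p$; for $X\subseteq V(g)$, $g[X]$ denotes the subgraph of $g$ induced on $X$. A join unit of $p$ with respect to $V_c(p)$ is a subgraph $q$ of $p$ together with a designated anchor vertex $a_q\in V(q)\cap V_c(p)$ that is adjacent in $q$ to every other vertex of $q$ (an R1 unit). The union of subgraphs has as vertex set and edge set the unions of their vertex sets and edge sets. A join tree for $p$ over $Q$ is a rooted tree in which every internal node has exactly two children, each node is labeled by a subgraph of $p$, the leaves are labeled by elements of $Q$, each internal node is labeled by the union of its children's labels, and the root is labeled by $p$ (it models performing the joins pairwise in some order). *)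

(* Defs.v *)
From mathcomp Require Import all_boot.
Set Implicit Arguments. Unset Strict Implicit. Unset Printing Implicit Defensive.

Section Graphs.
Variable T : finType.

Definition graph := ({set T} * {set {set T}})%type.
Definition verts (g : graph) : {set T} := g.1.
Definition edges (g : graph) : {set {set T}} := g.2.

Definition is_graph (g : graph) : bool :=
  [forall e in edges g, (#|e| == 2) && (e \subset verts g)].

Definition subgraph (q p : graph) : bool :=
  is_graph q && (verts q \subset verts p) && (edges q \subset edges p).

Definition gunion (g h : graph) : graph :=
  (verts g :|: verts h, edges g :|: edges h).

Definition vertex_cover (p : graph) (Vc : {set T}) : bool :=
  (Vc \subset verts p) && [forall e in edges p, [exists x in e, x \in Vc]].

Definition induced (p : graph) (X : {set T}) : graph :=
  (verts p :&: X, [set e in edges p | e \subset X]).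

Definition adj (g : graph) : rel T :=
  fun x y => [set x; y] \in edges g.

Definition components (g : graph) : {set {set T}} :=
  [set [set y in verts g | connect (fun u v => (u \in verts g) && adj g u v) x y]
   | x in verts g].

Definition join_unit (p : graph) (Vc : {set T}) (qa : graph * T) : bool :=
  let: (q, a) := qa in
  [&& subgraph q p, a \in verts q, a \in Vc &
      [forall v in verts q, (v != a) ==> adj q a v]].

Definition union_of (Q : {set graph * T}) : graph :=
  (\bigcup_(qa in Q) verts qa.1, \bigcup_(qa in Q) edges qa.1).

Inductive jtree := JLeaf of (graph * T) | JNode of jtree & jtree.

Fixpoint label (t : jtree) : graph :=
  match t with
  | JLeaf qa => qa.1
  | JNode l r => gunion (label l) (label r)
  end.

Fixpoint leaves_in (Q : {set graph * T}) (t : jtree) : bool :=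
  match t with
  | JLeaf qa => qa \in Q
  | JNode l r => leaves_in Q l && leaves_in Q r
  end.

Definition join_tree (p : graph) (Q : {set graph * T}) (t : jtree) : Prop :=
  leaves_in Q t /\ label t = p.

Fixpoint has_internal (P : graph -> graph -> bool) (t : jtree) : bool :=
  match t with
  | JLeaf _ => false
  | JNode l r => P (label l) (label r) || has_internal P l || has_internal P r
  end.

End Graphs.

(* Main.v *)
Require Import Defs.
From mathcomp Require Import all_boot.
Set Implicit Arguments. Unset Strict Implicit. Unset Printing Implicit Defensive.

Section Aux.
Variable T : finType.
Variables (p : graph T) (Vc : {set T}) (Q : {set graph T * T}).
Hypothesis Hg : is_graph p.
Hypothesis HQ : forall qa, qa \in Q -> join_unit p Vc qa.

Definition ee := fun u v => (u \in verts (induced p Vc)) && adj (induced p Vc) u v.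

Lemma ee_sym : symmetric ee.
Proof.
suff H : forall u v, ee u v -> ee v u.
  by move=> u v; apply/idP/idP; apply: H.
move=> u v /andP [_]; rewrite /adj /= inE => /andP [He Hs].
have /andP [_ Hsv] := implyP (forallP Hg _) He.
rewrite /ee /adj /= !inE setUC He Hs andbT.
have hv : v \in [set u; v] by rewrite !inE eqxx orbT.
by rewrite (subsetP Hsv v hv) (subsetP Hs v hv).
Qed.

Lemma inv (t : jtree T) : leaves_in Q t ->
  ~~ has_internal (fun p1 p2 => verts p1 :&: verts p2 :&: Vc == set0) t ->
  exists z, (exists w, w \in verts (label t) :&: Vc) /\
    forall v, v \in verts (label t) :&: Vc -> connect ee z v.
Proof.
elim: t => [[q a]|l IHl r IHr] /=.
  move=> /HQ /and4P [/andP [/andP [_ Hvq] Heq] Ha Hac /forallP Hall] _.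
  exists a; split; first by exists a; rewrite inE Ha Hac.
  move=> v; rewrite inE => /andP [Hv Hvc].
  have [->|Hne] := eqVneq v a; first exact: connect0.
  apply: connect1.
  move: (Hall v); rewrite Hv /= Hne /= /adj => Hadj.
  rewrite /ee /adj /= !inE (subsetP Hvq a Ha) Hac /= (subsetP Heq _ Hadj) /=.
  by apply/subsetP => x; rewrite !inE => /orP [] /eqP ->.
move=> /andP [Ll Lr]; rewrite !negb_or => /andP [/andP [Hne Hl] Hr].
have [z1 [_ H1]] := IHl Ll Hl.
have [z2 [[w2 Hw2] H2]] := IHr Lr Hr.
have /set0Pn [w Hw] := Hne.
move: Hw; rewrite !inE => /andP [/andP [Hwl Hwr] Hwc].
have c12 : connect ee z1 z2.
  apply: connect_trans (H1 w _) _; first by rewrite inE Hwl Hwc.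
  by rewrite (sym_connect_sym ee_sym); apply: H2; rewrite inE Hwr Hwc.
exists z1; split.
  by exists w2; move: Hw2; rewrite !inE => /andP [-> ->]; rewrite orbT.
move=> v; rewrite !inE => /andP [/orP [Hv|Hv] Hvc].
  by apply: H1; rewrite inE Hv Hvc.
by apply: connect_trans c12 (H2 v _); rewrite inE Hv Hvc.
Qed.

End Aux.

Theorem mainTheorem6 (T : finType) (p : graph T) (Vc : {set T})
  (Q : {set graph T * T}) (t : jtree T) :
  is_graph p ->
  vertex_cover p Vc ->
  1 < #|components (induced p Vc)| ->
  (forall qa, qa \in Q -> join_unit p Vc qa) ->
  union_of Q = p ->
  join_tree p Q t ->
  has_internal
    (fun p1 p2 => verts p1 :&: verts p2 :&: Vc == set0) t.
Proof.
move=> Hg /andP [Hsub _] Hcomp HQ _ [Hl Hlab].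
apply/negPn/negP => Hn.
have [z [_ Hz]] := inv Hg HQ Hl Hn.
rewrite Hlab in Hz.
have Hs := sym_connect_sym (ee_sym Vc Hg).
set cl := fun x => [set y in verts (induced p Vc) | connect (ee p Vc) x y].
suff : components (induced p Vc) \subset [set cl z].
  by move/subset_leq_card; rewrite cards1 leqNgt Hcomp.
apply/subsetP => C /imsetP [x Hx ->]; rewrite inE.
have Hzx : connect (ee p Vc) z x.
  by apply: Hz; move: Hx; rewrite /induced /= !inE.
apply/eqP/setP => y; rewrite !inE; congr andb.
apply/idP/idP => H.
  exact: connect_trans Hzx H.
by apply: connect_trans H; rewrite Hs.
Qed.
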